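(* In the setting of the context, let $k\ge1$, $a,b\ge0$ be integers with $a+b<k$. Then: (0) $\mathbf K_{k,a,b}(Z,Z')=\frac{n}{k-a-b}\big(\mathbf G_{k,a,b}(Z)-\mathbf G_{k,a,b}(Z')\big)$; (1) $\mathbf K_{k,a,b}(z',z)=-\mathbf K_{k,a,b}(z,z')$ identically; (2) $\mathbb E[\mathbf K_{k,a,b}(Z,Z')\mid Z]=\mathbf G_{k,a,b}(Z)$; (3) $(\mathbf D_1(Z)-\mathbf D_1(Z'))\mathbf K_{k,a,b}(Z,Z')=0$ and $\mathbf K_{k,a,b}(Z,Z')(\mathbf D_2(Z)-\mathbf D_2(Z'))=0$.
   Context: Let $Z=(Z_1,\dots,Z_n)$ be independent real random variables with finite moments of all orders; for $i\in[n]$, $\tilde Z_i$ is an independent copy of $Z_i$, $Z^{(i)}=(Z_1,\dots,Z_{i-1},\tilde Z_i,Z_{i+1},\dots,Z_n)$, and $Z'=Z^{(i)}$ for $i$ uniform in $[n]$ independent of everything else. Multi-index notation: for $\alpha,\beta\in\mathbb N^n$, sums and products are entrywise, $Z^\alpha=\prod_iZ_i^{\alpha_i}$, $|\alpha|_0$ is the number of nonzero entries, $|\alpha|_1=\sum_i\alpha_i$, $\alpha\le\beta$ is entrywise, $\alpha\unlhd\beta$ means $\alpha_i\in\{0,\beta_i\}$ for all $i$, and for $\gamma\in\{0,1\}^n$, $1-\gamma$ flips all bits. Polynomials are formal polynomials in $Z_1,\dots,Z_n$. $\nabla_\alpha(Z^\beta)=Z^{\beta-\alpha}$ if $\alpha\unlhd\beta$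 and $0$ otherwise (extended linearly, entrywise to matrices). For $\alpha\ne0$, $\chi_\alpha=\prod_{i:\alpha_i>0}(Z_i^{\alpha_i}-\mathbb E[Z_i^{\alpha_i}])$; every polynomial $f$ of degree $\le d_p$ is uniquely $c+\sum_{\alpha\ne0}\hat f(\alpha)\chi_\alpha$. Let $\mathcal I,\mathcal J$ be finite sets and $\mathbf F$ an $\mathcal I\times\mathcal J$ matrix with polynomial entries of total degree $\le d_p$; $\mathbf X=\mathbf F-\mathbb E\mathbf F=\sum_{\alpha\ne0}\hat{\mathbf X}(\alpha)\chi_\alpha$ and $\mathbf X_k=\sum_{|\alpha|_0=k}\hat{\mathbf X}(\alpha)\chi_\alpha$. $\mathcal K$ is the set of pairs $(\alpha,\gamma)$, $\alpha\in\mathbb N^n$, $|\alpha|_1\le d_p$, $\gamma\in\{0,1\}^n$, $\gamma\le\alpha$. $\mathbf D_1$ (resp. $\mathbf D_2$) is diagonal, indexed by $\mathcal I\times\mathcal K$ (resp. $\mathcal J\times\mathcal K$), with $(I,\alpha,\gamma)$ entry $\sqrt{\mathbb E[Z^{2\alpha\cdot(1-\gamma)}]}\,Z^{\alpha\cdot\gamma}$. $\mathbf G_{k,a,b}$ has rows $\mathcal I\times\mathcal K$, columns $\mathcal J\times\mathcal K$, and $[(I,\alpha_1,\gamma_1),(J,\alpha_2,\gamma_2)]$ entry $\nabla_{\alpha_1+\alpha_2}\mathbf X_k[I,J]$ if $|\alpha_1|_0=a,|\alpha_2|_0=b,\alpha_1\cdot\alpha_2=0$, and $0$ otherwise. For a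 mean-zero polynomial $f=\sum_{\alpha\ne0}\hat f(\alpha)\chi_\alpha$ put $\mathcal L^{-1}(f)=\sum_{\alpha\neq0}\frac{n}{|\alpha|_0}\hat f(\alpha)\chi_\alpha$ (applied entrywise), and for $a+b<k$ define the inner kernel $\mathbf K_{k,a,b}(z,z')=\mathcal L^{-1}(\mathbf G_{k,a,b})(z)-\mathcal L^{-1}(\mathbf G_{k,a,b})(z')$. *)

(* Defs.v *)
From HB Require Import structures.
From mathcomp Require Import all_boot all_order all_algebra.
From mathcomp Require Import mpoly.
From mathcomp Require Import boolp classical_sets reals ereal measure.
From mathcomp Require Import lebesgue_measure lebesgue_integral probability.
Set Implicit Arguments. Unset Strict Implicit. Unset Printing Implicit Defensive.
Import Order.TTheory GRing.Theory Num.Theory.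
Local Open Scope ring_scope.

Definition fmat (T1 T2 : finType) (V : Type) := T1 -> T2 -> V.
Definition fmmul (V : pzRingType) (T1 T2 T3 : finType)
  (A : fmat T1 T2 V) (B : fmat T2 T3 V) : fmat T1 T3 V :=
  fun x z => \sum_(y : T2) A x y * B y z.
Definition fmsub (V : pzRingType) (T1 T2 : finType) (A B : fmat T1 T2 V)
  : fmat T1 T2 V := fun x y => A x y - B x y.
Definition fmzero (V : pzRingType) (T1 T2 : finType) : fmat T1 T2 V :=
  fun _ _ => 0.
Definition fdiag (V : pzRingType) (T : finType) (d : T -> V) : fmat T T V :=
  fun x y => if x == y then d x else 0.

Section Setting.
Variables (R : realType) (n : nat).

Definition moment (mu : probability R R) (p : nat) : R :=
  fine (\int[mu]_t ((t ^+ p)%:E))%E.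

Definition supp0 (al : 'X_{1..n}) : {set 'I_n} := [set i | al i != 0%N].
Definition norm0 (al : 'X_{1..n}) : nat := #|supp0 al|.

Variable mu : 'I_n -> probability R R.

(* E[Z^beta] for independent Z_1..Z_n *)
Definition Emono (be : 'X_{1..n}) : R := \prod_(i < n) moment (mu i) (be i).
Definition Epoly (f : {mpoly R[n]}) : R := \sum_(m <- msupp f) f@_m * Emono m.

Definition chi (al : 'X_{1..n}) : {mpoly R[n]} :=
  \prod_(i < n | al i != 0%N) ('X_i ^+ al i - (moment (mu i) (al i))%:MP).

Variable dp : nat.

(* chaos coefficients: the (unique, for deg f <= dp) family h over the
   multi-indices with |alpha|_1 <= dp such that f = sum_alpha h(alpha) chi_alpha;
   h(0) is the constant c and h(alpha) = hat f(alpha) for alpha <> 0. *)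
Definition chaos (f : {mpoly R[n]}) : {ffun 'X_{1..n < dp.+1} -> R} :=
  xget [ffun=> 0] (fun h : {ffun 'X_{1..n < dp.+1} -> R} =>
    f = \sum_(al : 'X_{1..n < dp.+1}) h al *: chi al).

Definition Linv (f : {mpoly R[n]}) : {mpoly R[n]} :=
  \sum_(al : 'X_{1..n < dp.+1} | bmnm al != mnm0)
     ((n%:R / (norm0 al)%:R) * chaos f al) *: chi al.

Definition unle (al be : 'X_{1..n}) : bool :=
  [forall i, (al i == 0%N) || (al i == be i)].

Definition nabla (al : 'X_{1..n}) (f : {mpoly R[n]}) : {mpoly R[n]} :=
  \sum_(m <- msupp f) f@_m *: (if unle al m then 'X_[mnm_sub m al] else 0).

(* the index set K : pairs (alpha, gamma), |alpha|_1 <= dp, gamma in {0,1}^n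
   (encoded as the set of its 1-coordinates), gamma <= alpha *)
Definition Kidx := {x : 'X_{1..n < dp.+1} * {set 'I_n} | x.2 \subset supp0 x.1}.
Definition Kal (x : Kidx) : 'X_{1..n} := bmnm (sval x).1.
Definition Kga (x : Kidx) : {set 'I_n} := (sval x).2.

Variables (I J : finType) (F : I -> J -> {mpoly R[n]}).

Definition Xmat (i : I) (j : J) : {mpoly R[n]} := F i j - (Epoly (F i j))%:MP.
Definition Xk (k : nat) (i : I) (j : J) : {mpoly R[n]} :=
  \sum_(al : 'X_{1..n < dp.+1} | norm0 al == k) chaos (Xmat i j) al *: chi al.

Definition Gmat (k a b : nat) : fmat (I * Kidx)%type (J * Kidx)%type {mpoly R[n]} :=
  fun r c =>
    let a1 := Kal r.2 in let a2 := Kal c.2 in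
    if [&& norm0 a1 == a, norm0 a2 == b & [forall i, a1 i * a2 i == 0%N]]
    then nabla (mnm_add a1 a2) (Xk k r.1 c.1) else 0.

Definition Dent (T : finType) (z : 'I_n -> R) (r : (T * Kidx)%type) : R :=
  let al := Kal r.2 in let ga := Kga r.2 in
  Num.sqrt (Emono [multinom (if i \in ga then 0 else 2 * al i)%N | i < n])
  * \prod_(i < n) z i ^+ (if i \in ga then al i else 0%N).
Definition D1 (z : 'I_n -> R) : fmat (I * Kidx)%type (I * Kidx)%type R := fdiag (Dent z).
Definition D2 (z : 'I_n -> R) : fmat (J * Kidx)%type (J * Kidx)%type R := fdiag (Dent z).

Definition Kmat (k a b : nat) (z z' : 'I_n -> R) : fmat (I * Kidx)%type (J * Kidx)%type R :=
  fun r c => (Linv (Gmat k a b r c)).@[z] - (Linv (Gmat k a b r c)).@[z'].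

Definition evalm (T1 T2 : finType) (M : fmat T1 T2 {mpoly R[n]}) (z : 'I_n -> R)
  : fmat T1 T2 R := fun x y => (M x y).@[z].

Definition upd (z : 'I_n -> R) (i : 'I_n) (t : R) : 'I_n -> R :=
  fun j => if j == i then t else z j.

(* E[h(Z, Z') | Z = z], with Z' = Z^{(i)}, i uniform in [n], tilde Z_i ~ mu i
   independent of everything else *)
Definition condexpZ (h : ('I_n -> R) -> R) (z : 'I_n -> R) : R :=
  (n%:R)^-1 * \sum_(i < n) fine (\int[mu i]_t ((h (upd z i t))%:E))%E.

End Setting.

(* Main.v *)
Require Import Defs.
From HB Require Import structures.
From mathcomp Require Import all_boot all_order all_algebra.
From mathcomp Require Import mpoly ssrcomplements.
From mathcomp Require Import boolp classical_sets reals ereal measure.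
From mathcomp Require Import lebesgue_measure lebesgue_integral probability.
From mathcomp Require Import zify ring.
Set Implicit Arguments. Unset Strict Implicit. Unset Printing Implicit Defensive.
Import Order.TTheory GRing.Theory Num.Theory.
Local Open Scope ring_scope.

Section Pf.
Variables (R : realType) (n : nat) (mu : 'I_n -> probability R R).
Implicit Types (p q : {mpoly R[n]}) (be m g : 'X_{1..n}) (c : R).

Definition F2 (g : 'X_{1..n}) (j : 'I_n) : R :=
  if g j != 0%N then - moment (mu j) (g j) else 0.
Definition rs (g : 'X_{1..n}) (S : {set 'I_n}) : 'X_{1..n} :=
  [multinom (if i \in S then g i else 0%N) | i < n].
Definition cS (g : 'X_{1..n}) (S : {set 'I_n}) : R :=
  \prod_(i < n) (if i \in S then 1 else F2 g i).

Lemma chi_eval (x : 'I_n -> R) g :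
  (chi mu g).@[x] = \prod_(j < n | g j != 0%N) (x j ^+ g j - moment (mu j) (g j)).
Proof.
rewrite /chi rmorph_prod; apply: eq_bigr => j _.

by rewrite /= mevalB mevalC rmorphXn /= mevalXU.
Qed.

Lemma chiE g : chi mu g = \sum_(S : {set 'I_n}) cS g S *: 'X_[rs g S].
Proof.
have -> : chi mu g = \prod_(i < n) ('X_i ^+ g i + (F2 g i)%:MP).
  rewrite /chi big_mkcond /=; apply: eq_bigr => i _ /=.
  rewrite /F2; case: (eqVneq (g i) 0%N) => [->|_] /=.
    by rewrite expr0 mpolyC0 addr0.
  by rewrite mpolyCN.
rewrite bigA_distr; apply: eq_bigr => S _.
rewrite -mul_mpolyC /cS rmorph_prod /= mpolyXE_id -big_split /=.
apply: eq_bigr => i _; rewrite mnmE.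
by case: ifP => _; rewrite ?mpolyC1 ?mulr1 ?expr0 ?mul1r // mulrC.
Qed.


Lemma mcoeff_chi g m : (chi mu g)@_m = \sum_(S : {set 'I_n}) cS g S * (rs g S == m)%:R.
Proof.
rewrite chiE raddf_sum; apply: eq_bigr => S _.
by rewrite /= mcoeffZ mcoeffX.
Qed.

Lemma chi_top g : (chi mu g)@_g = 1.
Proof.
rewrite mcoeff_chi (bigD1 [set: 'I_n]%SET) //=.
have -> : rs g [set: 'I_n]%SET = g by apply/mnmP => i; rewrite mnmE finset.in_setT.
have -> : cS g [set: 'I_n]%SET = 1 by rewrite /cS big1 // => i _; rewrite finset.in_setT.
rewrite eqxx mulr1 big1 ?addr0 // => S nT.
case: eqP => [E|]; last by rewrite mulr0.
have [j jS] : exists j, j \notin S.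
  apply/existsP; apply: contraR nT => /existsPn H; apply/eqP/setP => j.
  by rewrite finset.in_setT; move: (H j); rewrite negbK.
have gj : g j = 0%N by move: E => /mnmP /(_ j); rewrite mnmE (negbTE jS).
by rewrite /cS (bigD1 j) //= (negbTE jS) /F2 gj eqxx /= !mul0r.
Qed.

Lemma chi_supp g m : (chi mu g)@_m != 0 -> forall i, (m i <= g i)%N.
Proof.
rewrite mcoeff_chi => H i.
have [S _ /eqP E] : exists2 S, true & rs g S == m.
  apply/exists_inP; apply: contraR H => /exists_inPn H.
  by rewrite big1 // => S _; rewrite (negbTE (H S isT)) mulr0.
by rewrite -E mnmE; case: ifP.
Qed.

Lemma mnm_le_eq (m g : 'X_{1..n}) :
  (forall i, m i <= g i)%N -> (mdeg g <= mdeg m)%N -> m = g.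
Proof.
move=> le dg; have L := @leqif_sum _ xpredT (fun i => m i == g i) _ _
   (fun i _ => leqif_eq (le i)).
have : (\sum_i m i == \sum_i g i)%N.
  rewrite eqn_leq -!mdegE dg andbT !mdegE; exact: (L.1).
rewrite L.2 => /forallP H; apply/mnmP => i; exact/eqP/H.
Qed.

Variable dp : nat.
Local Notation B := ('X_{1..n < dp.+1}).

Lemma chi_free (h : B -> R) :
  \sum_(al : B) h al *: chi mu al = 0 -> forall al, h al = 0.
Proof.
move=> E al0; apply/eqP; apply/negP => /negP H0.
case: (@arg_maxnP B al0 (fun x => h x != 0) (fun x : B => mdeg x) H0) => g0 hg0 mx.
move/(congr1 (mcoeff (bmnm g0))): E; rewrite raddf_sum mcoeff0 (bigD1 g0) //=.
rewrite mcoeffZ chi_top mulr1 big1 ?addr0; first by apply/eqP.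
move=> g ng; rewrite mcoeffZ.
have [->|hg] := eqVneq (h g) 0; first by rewrite mul0r.
have [->|cg] := eqVneq (chi mu g)@_g0 0; first by rewrite mulr0.
have := mnm_le_eq (chi_supp cg) (mx g hg) => /val_inj E.
by move: ng; rewrite E eqxx.
Qed.

Lemma chaos_eq (f : {mpoly R[n]}) (h : {ffun B -> R}) :
  f = \sum_(al : B) h al *: chi mu al -> chaos mu dp f = h.
Proof.
move=> E; rewrite /chaos.
set h' := xget _ _.
have E' : f = \sum_(al : B) h' al *: chi mu al.
  by apply: (@xgetPex _ [ffun=> 0] (fun h : {ffun B -> R} => f = \sum_(al : B) h al *: chi mu al)); exists h.
apply/ffunP => al; apply/eqP; rewrite -subr_eq0; apply/eqP.
apply: (@chi_free (fun al => h' al - h al)).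
under eq_bigr do rewrite scalerBl.
by rewrite sumrB -E' -E subrr.
Qed.


Definition nablaT (be m : 'X_{1..n}) : {mpoly R[n]} :=
  if unle be m then 'X_[mnm_sub m be] else 0.

Lemma nablaE be (p : {mpoly R[n]}) i : (msize p <= i)%N ->
  nabla be p = \sum_(m : 'X_{1..n < i}) p@_m *: nablaT be m.
Proof.
move=> le_pi; set I : subFinType _ := 'X_{1..n < i}.
rewrite /nabla (big_mksub I) ?msupp_uniq //=; first last.
  by move=> x /msize_mdeg_lt /leq_trans; apply.
rewrite big_rmcond //= => j /memN_msupp_eq0 ->.
by rewrite scale0r.
Qed.

Lemma nablaD be p q : nabla be (p + q) = nabla be p + nabla be q.
Proof.
set i := (msize p + msize q + msize (p + q))%N.
rewrite (nablaE be (i := i)) ?[nabla be p](nablaE be (i := i))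
   ?[nabla be q](nablaE be (i := i)) /i; try lia.
rewrite -big_split; apply: eq_bigr => m _ /=.
by rewrite mcoeffD scalerDl.
Qed.

Lemma nablaZ be c p : nabla be (c *: p) = c *: nabla be p.
Proof.
rewrite !(nablaE be (i := msize p)) ?msizeZ_le // scaler_sumr.
by apply: eq_bigr => m _; rewrite mcoeffZ scalerA.
Qed.

Lemma nabla0 be : nabla be (0 : {mpoly R[n]}) = 0.
Proof. by have := nablaZ be 0 0; rewrite !scale0r. Qed.

Lemma nabla_sum be (T : Type) (r : seq T) (P : pred T) (f : T -> {mpoly R[n]}) :
  nabla be (\sum_(x <- r | P x) f x) = \sum_(x <- r | P x) nabla be (f x).
Proof.
elim: r => [|x r IH]; first by rewrite !big_nil nabla0.
by rewrite !big_cons; case: (P x); rewrite ?nablaD IH.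
Qed.

Lemma nablaX be m : nabla be 'X_[m] = nablaT be m.
Proof. by rewrite /nabla msuppX big_seq1 mcoeffX eqxx scale1r. Qed.

Lemma nabla_chi be g :
  nabla be (chi mu g) = if unle be g then chi mu (mnm_sub g be) else 0.
Proof.
rewrite chiE nabla_sum.
under eq_bigr do rewrite nablaZ nablaX.
case: ifP => hu.
- rewrite chiE; apply: eq_bigr => S _; rewrite /nablaT.
  move/forallP: hu => hu.
  case: (boolP [forall i, (be i != 0%N) ==> (i \in S)]) => [/forallP hS | /forallPn [i]].
  + have -> : unle be (rs g S).
      apply/forallP => i; rewrite mnmE; case: (eqVneq (be i) 0%N) => //= bi.
      have := hS i; rewrite bi /= => ->.
      by have := hu i; rewrite (negbTE bi).
    have bS i : i \notin S -> be i = 0%N.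
      move=> iS; apply/eqP; apply: contraNT iS => bi.
      exact: (implyP (hS i) bi).
    congr (_ *: _).
      rewrite /cS; apply: eq_bigr => i _; case: ifP => // /negbT iS.
      by rewrite /F2 mnmBE bS // subn0.
    congr 'X_[_]; apply/mnmP => i; rewrite !mnmE.
    by case: ifP => // /negbT iS; rewrite bS.
  + rewrite negb_imply => /andP [bi iS].
    have -> : unle be (rs g S) = false.
      apply/negbTE/forallPn; exists i.
      by rewrite mnmE (negbTE iS) (negbTE bi).
    have -> : cS (mnm_sub g be) S = 0.
      rewrite /cS (bigD1 i) //= (negbTE iS) /F2 mnmBE.
      have := hu i; rewrite (negbTE bi) /= => /eqP ->.
      by rewrite subnn eqxx mul0r.
    by rewrite scaler0 scale0r.
- apply: big1 => S _; rewrite /nablaT.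
  case: ifP => hS; last by rewrite scaler0.
  exfalso; move/negbT: hu => /forallPn [i].
  move/forallP: hS => /(_ i); rewrite mnmE.
  case: (i \in S) => [-> //|]; rewrite orbb => /eqP ->.
  by rewrite eqxx.
Qed.


Definition Pspan (k : nat) be f := exists h : {ffun B -> R},
  f = \sum_(al : B) h al *: chi mu al /\
  forall al : B, h al != 0 -> norm0 al = k /\ forall i, be i != 0%N -> al i = 0%N.

Lemma Pspan0 k be : Pspan k be 0.
Proof.
exists [ffun=> 0]; split; last by move=> al; rewrite ffunE eqxx.
by rewrite big1 // => al _; rewrite ffunE scale0r.
Qed.

Lemma PspanD k be p q : Pspan k be p -> Pspan k be q -> Pspan k be (p + q).
Proof.
move=> [h1 [E1 H1]] [h2 [E2 H2]].
exists [ffun al => h1 al + h2 al]; split.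
  by rewrite E1 E2 -big_split; apply: eq_bigr => al _; rewrite ffunE scalerDl.
move=> al; rewrite ffunE.
have [h10|] := eqVneq (h1 al) 0; last by move/H1.
by rewrite h10 add0r => /H2.
Qed.

Lemma PspanZ k be c p : Pspan k be p -> Pspan k be (c *: p).
Proof.
move=> [h1 [E1 H1]].
exists [ffun al => c * h1 al]; split.
  by rewrite E1 scaler_sumr; apply: eq_bigr => al _; rewrite ffunE scalerA.
move=> al; rewrite ffunE mulf_eq0 negb_or => /andP [_]; exact: H1.
Qed.

Lemma Pspan_sum k be (T : Type) (r : seq T) (P : pred T) (f : T -> {mpoly R[n]}) :
  (forall x, P x -> Pspan k be (f x)) -> Pspan k be (\sum_(x <- r | P x) f x).
Proof.
move=> H; elim: r => [|x r IH]; first by rewrite big_nil; exact: Pspan0.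
rewrite big_cons; case: ifP => Px //; exact: PspanD (H x Px) IH.
Qed.

Lemma Pspan_chi k be (al : B) : norm0 al = k -> (forall i, be i != 0%N -> al i = 0%N) ->
  Pspan k be (chi mu al).
Proof.
move=> Hk Hd; exists [ffun x => (x == al)%:R]; split.
  rewrite (bigD1 al) //= ffunE eqxx scale1r big1 ?addr0 // => x nx.
  by rewrite ffunE (negbTE nx) scale0r.
move=> x; rewrite ffunE; have [-> _|nx] := eqVneq x al; first by split.
by rewrite eqxx.
Qed.

Lemma norm0_0 : norm0 (0%MM : 'X_{1..n}) = 0%N.
Proof.
rewrite /norm0 (_ : supp0 _ = finset.set0) ?cards0 //.
by apply/setP => i; rewrite !inE mnm0E.
Qed.

Lemma Linv_span k be f : (0 < k)%N -> Pspan k be f ->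
  Linv mu dp f = (n%:R / k%:R) *: f.
Proof.
move=> k0 Hf; have [h [E H]] := Hf.
rewrite /Linv (chaos_eq E) [in RHS]E scaler_sumr big_mkcond /=.
apply: eq_bigr => al _.
have [->|hal] := eqVneq (h al) 0; first by rewrite mulr0 !scale0r scaler0; case: ifP.
have [Hk _] := H al hal.
have -> : bmnm al != 0%MM.
  by apply: contraTneq k0 => E0; rewrite -Hk E0 norm0_0.
by rewrite Hk scalerA.
Qed.


Lemma supp0_sub al be : unle be al -> supp0 (mnm_sub al be) = supp0 al :\: supp0 be.
Proof.
move=> /forallP hu; apply/setP => i; rewrite !inE mnmBE.
by case/orP: (hu i) => /eqP ->; rewrite ?subn0 ?subnn ?eqxx ?andbT ?andNb.
Qed.

Lemma supp0_le al be : unle be al -> supp0 be \subset supp0 al.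
Proof.
move=> /forallP hu; apply/fintype.subsetP => i; rewrite !inE.
by case/orP: (hu i) => /eqP ->; rewrite ?eqxx.
Qed.

Lemma norm0_add (a1 a2 : 'X_{1..n}) : (forall i, a1 i * a2 i == 0)%N ->
  norm0 (mnm_add a1 a2) = (norm0 a1 + norm0 a2)%N.
Proof.
move=> H; rewrite /norm0.
have -> : supp0 (mnm_add a1 a2) = supp0 a1 :|: supp0 a2.
  by apply/setP => i; rewrite !inE mnmDE addn_eq0 negb_and.
rewrite cardsU (_ : supp0 a1 :&: supp0 a2 = finset.set0) ?cards0 ?subn0 //.
apply/setP => i; rewrite !inE; have := H i; rewrite muln_eq0.
by case/orP => /eqP ->; rewrite ?eqxx ?andbF.
Qed.

Lemma G_span (I J : finType) (F : I -> J -> {mpoly R[n]}) k a b (r : (I * Kidx n dp)%type) (c : (J * Kidx n dp)%type) :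
  Pspan (k - a - b) (mnm_add (Kal r.2) (Kal c.2)) (Gmat mu (dp:=dp) F k a b r c).
Proof.
rewrite /Gmat; case: ifP => [/and3P [/eqP na /eqP nb /forallP dis]|]; last first.
  by move=> _; apply: Pspan0.
rewrite /Xk nabla_sum; apply: Pspan_sum => al /eqP nal.
rewrite nablaZ; apply: PspanZ; rewrite nabla_chi.
case: ifP => hu; last exact: Pspan0.
set be := mnm_add _ _.
have hd : (mdeg (mnm_sub al be) < dp.+1)%N := leq_ltn_trans (mdegB _ _) (bmdeg al).
apply: (@Pspan_chi (k - a - b) be (BMultinom hd)) => /=.
  rewrite /norm0 supp0_sub // cardsD.
  move/finset.setIidPr: (supp0_le hu) => ->.
  have := norm0_add dis; rewrite /norm0 => ->.
  by rewrite -/(norm0 _) -/(norm0 _) -/(norm0 _) nal na nb subnDA.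
move=> i bi; rewrite mnmBE.
by move/forallP: hu => /(_ i); rewrite (negbTE bi) /= => /eqP ->; rewrite subnn.
Qed.


Lemma eval_sum (h : B -> R) x :
  (\sum_(al : B) h al *: chi mu al).@[x] = \sum_(al : B) h al * (chi mu al).@[x].
Proof. by rewrite raddf_sum; apply: eq_bigr => al _; rewrite /= mevalZ. Qed.

Lemma chi_upd g z i t : g i = 0%N -> (chi mu g).@[upd z i t] = (chi mu g).@[z].
Proof.
move=> gi; rewrite !chi_eval; apply: eq_bigr => j gj; rewrite /upd.
by case: eqP => // ji; move: gj; rewrite ji gi.
Qed.

Lemma span_upd k be f z i t : Pspan k be f -> be i != 0%N -> f.@[upd z i t] = f.@[z].
Proof.
move=> [h [E H]] bi; rewrite E !eval_sum; apply: eq_bigr => al _.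
have [->|hal] := eqVneq (h al) 0; first by rewrite !mul0r.
by have [_ /(_ i bi) ali] := H al hal; rewrite chi_upd.
Qed.

Hypothesis Hmom : forall (i : 'I_n) (p : nat),
  (mu i).-integrable setT (fun t : R => (t ^+ p)%:E).

Local Notation intR i g := ((mu i).-integrable setT (EFin \o g)).
Local Notation Ei i g := (Rintegral (mu i) setT g).

Lemma int_eq i (f g : R -> R) : f =1 g -> intR i f -> intR i g.
Proof. by move=> fg; apply: eq_integrable => // t _ /=; rewrite fg. Qed.

Lemma int_cst i c : intR i (fun _ => c).
Proof. exact: finite_measure_integrable_cst. Qed.

Lemma int_scale i c (f : R -> R) : intR i f -> intR i (fun t => c * f t).
Proof. by move=> H; apply: eq_integrable (integrableZl _ c H) => // t _ /=; rewrite EFinM. Qed.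

Lemma int_add i (f g : R -> R) : intR i f -> intR i g -> intR i (fun t => f t + g t).
Proof. by move=> Hf Hg; apply: eq_integrable (integrableD _ Hf Hg) => // t _ /=; rewrite EFinD. Qed.

Lemma int_sub i (f g : R -> R) : intR i f -> intR i g -> intR i (fun t => f t - g t).
Proof. by move=> Hf Hg; apply: eq_integrable (integrableB _ Hf Hg) => // t _ /=; rewrite EFinB. Qed.

Lemma int_sum i (T : Type) (r : seq T) (P : pred T) (f : T -> R -> R) :
  (forall x, P x -> intR i (f x)) -> intR i (fun t => \sum_(x <- r | P x) f x t).
Proof.
move=> H; elim: r => [|x r IH].
  by apply: (int_eq (f := fun _ => 0)) (int_cst i 0) => t; rewrite big_nil.
apply: (int_eq (f := fun t => (if P x then f x t else 0) + \sum_(y <- r | P y) f y t)).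
  by move=> t; rewrite big_cons; case: (P x); rewrite ?add0r.
apply: int_add; last exact: IH.
case Px: (P x); [exact: H | exact: int_cst].
Qed.

Lemma int_poly p z i : intR i (fun t => p.@[upd z i t]).
Proof.
apply: (int_eq (f := fun t => \sum_(m <- msupp p)
   (p@_m * \prod_(j < n | j != i) z j ^+ m j) * t ^+ m i)).
  move=> t; rewrite mevalE; apply: eq_bigr => m _.
  rewrite [in RHS](bigD1 i) //= /upd eqxx -mulrA [t ^+ _ * _]mulrC; congr (_ * (_ * _)).
  by apply: eq_bigr => j /negbTE ->.
apply: int_sum => m _; apply: int_scale; exact: Hmom.
Qed.

Lemma E_eq i (f g : R -> R) : f =1 g -> Ei i f = Ei i g.
Proof. by move=> fg; apply: eq_Rintegral => t _; rewrite fg. Qed.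

Lemma E_cst i c : Ei i (fun _ => c) = c.
Proof. by rewrite Rintegral_cst // (congr1 fine (probability_setT (mu i))) mulr1. Qed.

Lemma E_scale i c (f : R -> R) : intR i f -> Ei i (fun t => c * f t) = c * Ei i f.
Proof. by move=> H; rewrite RintegralZl. Qed.

Lemma E_sub i (f g : R -> R) : intR i f -> intR i g ->
  Ei i (fun t => f t - g t) = Ei i f - Ei i g.
Proof. by move=> Hf Hg; rewrite RintegralB. Qed.

Lemma E_sum i (T : Type) (r : seq T) (P : pred T) (f : T -> R -> R) :
  (forall x, P x -> intR i (f x)) ->
  Ei i (fun t => \sum_(x <- r | P x) f x t) = \sum_(x <- r | P x) Ei i (f x).
Proof.
move=> H; elim: r => [|x r IH].
  by rewrite big_nil (@E_eq i _ (fun _ => 0)) ?E_cst // => t; rewrite big_nil.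
rewrite big_cons -IH.
rewrite (@E_eq i _ (fun t => (if P x then f x t else 0) + \sum_(y <- r | P y) f y t)); last first.
  by move=> t; rewrite big_cons; case: (P x); rewrite ?add0r.
rewrite RintegralD //; last exact: int_sum.
  by case Px: (P x); rewrite ?E_cst ?add0r.
by case Px: (P x); [exact: H | exact: int_cst].
Qed.

Lemma E_chi g z i :
  Ei i (fun t => (chi mu g).@[upd z i t]) = if g i == 0%N then (chi mu g).@[z] else 0.
Proof.
case: eqP => [gi|/eqP gi].
  by rewrite (@E_eq i _ (fun _ => (chi mu g).@[z])) ?E_cst // => t; rewrite chi_upd.
set Q := \prod_(j < n | (g j != 0%N) && (j != i)) (z j ^+ g j - moment (mu j) (g j)).
rewrite (@E_eq i _ (fun t => (t ^+ g i - moment (mu i) (g i)) * Q)); last first.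
  move=> t; rewrite chi_eval (bigD1 i) //= /upd eqxx; congr (_ * _).
  by apply: eq_bigr => j /andP [_ /negbTE ->].
rewrite RintegralZr //; last by apply: int_sub; [exact: Hmom | exact: int_cst].
rewrite E_sub ?E_cst; [by rewrite subrr mul0r | exact: Hmom | exact: int_cst].
Qed.


Lemma Dent_upd (T : finType) z i t (x : (T * Kidx n dp)%type) :
  i \notin Kga x.2 -> Dent mu z x = Dent mu (upd z i t) x.
Proof.
move=> ni; rewrite /Dent; congr (_ * _); apply: eq_bigr => j _; rewrite /upd.
by case: eqP => // ->; rewrite (negbTE ni) !expr0.
Qed.

Lemma Kga_sub (x : Kidx n dp) i : i \in Kga x -> Kal x i != 0%N.
Proof.
move=> H; have := svalP x => /fintype.subsetP /(_ i H).
by rewrite /supp0 inE.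
Qed.

End Pf.

Unset Implicit Arguments.

Theorem mainTheorem11 (R : realType) (n : nat) (hn : (0 < n)%N)
  (mu : 'I_n -> probability R R)
  (Hmom : forall (i : 'I_n) (p : nat),
            (mu i).-integrable setT (fun t : R => (t ^+ p)%:E))
  (dp : nat) (I J : finType) (F : I -> J -> {mpoly R[n]})
  (HF : forall (i : I) (j : J), (msize (F i j) <= dp.+1)%N)
  (k a b : nat) (hk : (1 <= k)%N) (hab : (a + b < k)%N) :
  let G := Gmat mu (dp:=dp) F k a b in
  let K := Kmat mu (dp:=dp) F k a b in
  [/\ (* (0) *)
      (forall (z : 'I_n -> R) (i : 'I_n) (t : R) r c,
         K z (upd z i t) r c
         = n%:R / (k - a - b)%N%:R
           * (evalm G z r c - evalm G (upd z i t) r c)),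
      (* (1) *)
      (forall (z z' : 'I_n -> R) r c, K z' z r c = - K z z' r c),
      (* (2) *)
      (forall (z : 'I_n -> R) r c,
         condexpZ mu (fun z' => K z z' r c) z = evalm G z r c) &
      (* (3) *)
      (forall (z : 'I_n -> R) (i : 'I_n) (t : R),
         fmmul (fmsub (D1 mu (dp:=dp) (I:=I) z) (D1 mu (dp:=dp) (I:=I) (upd z i t))) (K z (upd z i t))
           = @fmzero _ _ _
         /\ fmmul (K z (upd z i t)) (fmsub (D2 mu (dp:=dp) (J:=J) z) (D2 mu (dp:=dp) (J:=J) (upd z i t)))
           = @fmzero _ _ _)].
Proof.
move=> G K.
set m := (k - a - b)%N.
have m0 : (0 < m)%N by rewrite /m -subnDA subn_gt0.
have Gsp r c : Pspan mu dp m (mnm_add (Kal r.2) (Kal c.2)) (G r c) by apply: G_span.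
have HK z z' r c : K z z' r c = n%:R / m%:R * ((G r c).@[z] - (G r c).@[z']).
  rewrite /K /Kmat (Linv_span m0 (Gsp r c)).
  by rewrite !mevalZ mulrBr.
split.
- by move=> z i t r c; rewrite HK.
- by move=> z z' r c; rewrite !HK -mulrN opprB.
- move=> z r c; rewrite /condexpZ /evalm.
  have [h [E H]] := Gsp r c.
  have step i : fine (\int[mu i]_t (K z (upd z i t) r c)%:E)%E = n%:R / m%:R *
      \sum_(al : 'X_{1..n < dp.+1}) (if al i != 0%N then h al * (chi mu al).@[z] else 0).
    rewrite -/(Rintegral (mu i) setT (fun t => K z (upd z i t) r c)).
    rewrite (@E_eq _ _ _ i _ (fun t => n%:R / m%:R * ((G r c).@[z] - (G r c).@[upd z i t]))); last first.
      by move=> t; rewrite HK.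
    rewrite E_scale; last by apply: int_sub; [exact: int_cst | exact: (int_poly Hmom)].
    rewrite E_sub; [|exact: int_cst | exact: (int_poly Hmom)].
    rewrite E_cst.
    rewrite (@E_eq _ _ _ i _ (fun t => \sum_(al : 'X_{1..n < dp.+1}) h al * (chi mu al).@[upd z i t])); last first.
      by move=> t; rewrite E eval_sum.
    rewrite E_sum; last by move=> al _; apply: int_scale; exact: (int_poly Hmom).
    congr (_ * _); rewrite E eval_sum -sumrB; apply: eq_bigr => al _.
    rewrite E_scale ?(E_chi Hmom); last exact: (int_poly Hmom).
    by case: (al i == 0%N) => /=; rewrite ?mulr0 ?subr0 ?subrr.
  rewrite (eq_bigr _ (fun i _ => step i)) -mulr_sumr exchange_big /=.
  have cnt (al : 'X_{1..n < dp.+1}) : \sum_i (if al i != 0%N then h al * (chi mu al).@[z] else 0)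
      = (h al * (chi mu al).@[z]) *+ m.
    rewrite -big_mkcond /= (eq_bigl (fun i => i \in supp0 al)) ?sumr_const; last first.
      by move=> i; rewrite inE.
    have [->|hal] := eqVneq (h al) 0; first by rewrite !mul0r !mul0rn.
    by have [<- _] := H al hal.
  under eq_bigr do rewrite cnt.
  rewrite E eval_sum sumrMnl .
  have n0 : (n%:R : R) != 0 by rewrite pnatr_eq0 -lt0n.
  have mm0 : (m%:R : R) != 0 by rewrite pnatr_eq0 -lt0n.
  by rewrite mulrA mulKf ?mul1r // -[X in _ * X]mulr_natr mulrCA mulVf // mulr1.
- move=> z i t; split; apply/funext => r; apply/funext => c;
    rewrite /fmmul /fmsub /fmzero.
  + rewrite /D1 /fdiag (bigD1 r) //= eqxx big1 ?addr0; last first.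
      by move=> y ny; rewrite eq_sym (negbTE ny) subrr mul0r.
    have [iga|niga] := boolP (i \in Kga r.2).
      rewrite HK (span_upd z t (Gsp r c)) ?subrr ?mulr0 //.
      by rewrite mnmDE addn_eq0 negb_and (Kga_sub iga).
    by rewrite -[Dent mu (upd z i t) r]Dent_upd // subrr mul0r.
  + rewrite /D2 /fdiag (bigD1 c) //= eqxx big1 ?addr0; last first.
      by move=> y ny; rewrite (negbTE ny) subrr mulr0.
    have [iga|niga] := boolP (i \in Kga c.2).
      rewrite HK (span_upd z t (Gsp r c)) ?subrr ?mulr0 ?mul0r //.
      by rewrite mnmDE addn_eq0 negb_and (Kga_sub iga) orbT.
    by rewrite -[Dent mu (upd z i t) c]Dent_upd // subrr mulr0.
Qed.
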